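(* Let $k\geq 1$ be an integer and let $m,n$ be integers with $m\geq n\geq 0$. Then \[C_{k,m}C_{k,n+1}-C_{k,n}C_{k,m+1}=-8(k-1)^{n+1}\,B_{k,m-n}.\]
   Context: For an integer $k\geq 1$, the generalized balancing numbers are defined by $B_{k,0}=0$, $B_{k,1}=1$ and $B_{k,n}=3kB_{k,n-1}+(1-k)B_{k,n-2}$ for $n\geq 2$; the generalized balancing-Lucas numbers are defined by $C_{k,0}=1$, $C_{k,1}=3$ and $C_{k,n}=3kC_{k,n-1}+(1-k)C_{k,n-2}$ for $n\geq 2$. *)

(* Defs.v *)
From mathcomp Require Import all_boot all_order all_algebra.
Set Implicit Arguments. Unset Strict Implicit. Unset Printing Implicit Defensive.
Import Order.TTheory GRing.Theory Num.Theory.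
Local Open Scope ring_scope.

Fixpoint genrec (k : int) (a b : int) (n : nat) : int :=
  match n with
  | 0%N => a
  | 1%N => b
  | (n'.+1 as m).+1 => 3 * k * genrec k a b m + (1 - k) * genrec k a b n'
  end.

Definition B (k : int) (n : nat) : int := genrec k 0 1 n.
Definition C (k : int) (n : nat) : int := genrec k 1 3 n.

(* Main.v *)
Require Import Defs.
From mathcomp Require Import all_boot all_order all_algebra.
From mathcomp Require Import ring.
Import Order.TTheory GRing.Theory Num.Theory.
Local Open Scope ring_scope.

Lemma genrecS (k a b : int) (n : nat) :
  genrec k a b n.+2 = 3 * k * genrec k a b n.+1 + (1 - k) * genrec k a b n.
Proof. by []. Qed.

Lemma E_lem (k : int) (j : nat) :
  3 * C k j - C k j.+1 = (8 - 8 * k) * B k j /\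
  3 * C k j.+1 - C k j.+2 = (8 - 8 * k) * B k j.+1.
Proof.
elim: j => [|j [IH1 IH2]].
  rewrite /C /B /= ; split; ring.
split; first exact: IH2.
have hC2 : C k j.+2 = 3 * k * C k j.+1 + (1 - k) * C k j by [].
have hC3 : C k j.+3 = 3 * k * C k j.+2 + (1 - k) * C k j.+1 by [].
have hB : B k j.+2 = 3 * k * B k j.+1 + (1 - k) * B k j by [].
have -> : 3 * C k j.+2 - C k j.+3
  = 3 * k * (3 * C k j.+1 - C k j.+2) + (1 - k) * (3 * C k j - C k j.+1).
  rewrite hC3 {1}hC2; ring.
rewrite IH1 IH2 hB; ring.
Qed.

Lemma shift (k : int) (a b : nat) :
  C k a.+1 * C k b.+2 - C k b.+1 * C k a.+2
  = (k - 1) * (C k a * C k b.+1 - C k b * C k a.+1).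
Proof. rewrite /C !genrecS; ring. Qed.

Theorem mainTheorem6 (k : int) (m n : nat) :
  1 <= k -> (n <= m)%N ->
  C k m * C k n.+1 - C k n * C k m.+1 = - 8 * (k - 1) ^+ n.+1 * B k (m - n).
Proof.
move=> _ /subnK <-; rewrite addnK; set d := (m - n)%N; clearbody d.
elim: n => [|n IH].
  rewrite addn0 expr1.
  have [E _] := E_lem k d.
  have -> : C k d * C k 1 - C k 0 * C k d.+1 = 3 * C k d - C k d.+1.
    by rewrite /C /=; ring.
  rewrite E; ring.
rewrite addnS shift IH !exprS; ring.
Qed.
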